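(* Let $q>1$ be the smallest period of $H$. Then $c>2A$, and at least one gap $\gamma_m$ ($1\le m\le q-1$) of the spectrum of $H$ is open.
   Context: Let $q\ge 2$ be an integer and let $(a_n)_{n\in\mathbb Z}$, $(b_n)_{n\in\mathbb Z}$ be real sequences with $a_n>0$, $a_{n+q}=a_n$, $b_{n+q}=b_n$ for all $n$, where $q$ is the smallest common period (there is no $1\le p<q$ with $a_{n+p}=a_n$ and $b_{n+p}=b_n$ for all $n$). $H$ is the bounded self-adjoint operator on $\ell^2(\mathbb Z)$ given by $(H\psi)_n=a_{n-1}\psi_{n-1}+b_n\psi_n+a_n\psi_{n+1}$. Set $A=(a_1a_2\cdots a_q)^{1/q}$. For $\lambda\in\mathbb C$ let $\phi(\lambda),\theta(\lambda)$ be the solutions of $a_{n-1}\psi_{n-1}+b_n\psi_n+a_n\psi_{n+1}=\lambda\psi_n$ ($n\in\mathbb Z$) with $\phi_0=0,\phi_1=1$ and $\theta_0=1,\theta_1=0$; the discriminant is the degree-$q$ polynomial $D(\lambda)=\phi_{q+1}(\lambda)+\theta_q(\lambda)$. The spectrum of $H$ is $\{\lambda\in\mathbb R:|D(\lambda)|\le 2\}$, a union of the $q$ bands $[\lambda^+_{m-1},\lambda^-_m]$, $m=1,\dots,q$, with $\lambda^+_0<\lambda^-_1\le\lambda^+_1<\lambda^-_2\le\dots\le\lambda^+_{q-1}<\lambda^-_q$, separated by the gaps $\gamma_m=(\lambda^-_m,\lambda^+_m)$, $m=1,\dots,q-1$ (a gap is open if $\lambda^-_m<\lambda^+_m$). Let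 $c=(\lambda^-_q-\lambda^+_0)/2$ be half the width of the spectrum. *)

(* Defs.v *)
From HB Require Import structures.
From mathcomp Require Import all_boot all_order all_algebra.
From mathcomp Require Import reals exp.
Set Implicit Arguments. Unset Strict Implicit. Unset Printing Implicit Defensive.
Import Order.TTheory GRing.Theory Num.Theory.
Local Open Scope ring_scope.

(* Solution of a_{n-1} psi_{n-1} + b_n psi_n + a_n psi_{n+1} = lam psi_n,
   computed forward from (psi_0, psi_1):
   jacobi_pair a b lam x0 x1 n = (psi_n, psi_{n+1}). *)
Fixpoint jacobi_pair (R : realType) (a b : int -> R) (lam x0 x1 : R) (n : nat)
  : R * R :=
  match n with
  | 0%N => (x0, x1)
  | n'.+1 =>
      let p := jacobi_pair a b lam x0 x1 n' in
      (p.2, ((lam - b (n'.+1)%:Z) * p.2 - a (n')%:Z * p.1) / a (n'.+1)%:Z)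
  end.

Definition jphi (R : realType) (a b : int -> R) (lam : R) (n : nat) : R :=
  (jacobi_pair a b lam 0 1 n).1.
Definition jtheta (R : realType) (a b : int -> R) (lam : R) (n : nat) : R :=
  (jacobi_pair a b lam 1 0 n).1.

Definition discr (R : realType) (a b : int -> R) (q : nat) (lam : R) : R :=
  jphi a b lam q.+1 + jtheta a b lam q.

Definition geomA (R : realType) (a : int -> R) (q : nat) : R :=
  powR (\prod_(1 <= i < q.+1) a i%:Z) (q%:R^-1).

(* Main.v *)
Require Import Defs.
From HB Require Import structures.
From mathcomp Require Import all_boot all_order all_algebra.
From mathcomp Require Import reals exp trigo.
From mathcomp Require Import polyrcf.
From mathcomp Require Import ring lra zify.
Import Order.TTheory GRing.Theory Num.Theory.
Local Open Scope ring_scope.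
Set Implicit Arguments. Unset Strict Implicit. Unset Printing Implicit Defensive.
Section Poly.
Variable R : realType.
Variables (a b : int -> R).
Hypothesis ha : forall n, 0 < a n.

Fixpoint pjp (x0 x1 : {poly R}) (n : nat) : {poly R} * {poly R} :=
  match n with
  | 0%N => (x0, x1)
  | n'.+1 => let p := pjp x0 x1 n' in
     (p.2, (a (n'.+1)%:Z)^-1 *: (p.2 * 'X - b (n'.+1)%:Z *: p.2 - a n'%:Z *: p.1))
  end.

Definition psi x0 x1 n := (pjp x0 x1 n).1.

Lemma psiS x0 x1 n : psi x0 x1 n.+2 =
  (a (n.+1)%:Z)^-1 *: (psi x0 x1 n.+1 * 'X - b (n.+1)%:Z *: psi x0 x1 n.+1 - a n%:Z *: psi x0 x1 n).
Proof. by []. Qed.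

Lemma anz n : a n != 0. Proof. by rewrite gt_eqF. Qed.

Lemma psi_eval c0 c1 lam n :
  (psi c0%:P c1%:P n).[lam] = (jacobi_pair a b lam c0 c1 n).1 /\
  (psi c0%:P c1%:P n.+1).[lam] = (jacobi_pair a b lam c0 c1 n).2.
Proof.
elim: n => [|n [IH1 IH2]]; first by rewrite /psi /= !hornerC.
split; first by rewrite IH2.
rewrite psiS /= !hornerE IH1 IH2 /=.
by rewrite mulrC; congr (_ * _); ring.
Qed.

Lemma psi_coef0 x0 x1 n :
  (psi x0 x1 n.+2)`_0 = (a (n.+1)%:Z)^-1 * (- b (n.+1)%:Z * (psi x0 x1 n.+1)`_0 - a n%:Z * (psi x0 x1 n)`_0).
Proof. by rewrite psiS coefZ !coefB coefMX !coefZ /=; ring. Qed.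

Lemma psi_coefS x0 x1 n j :
  (psi x0 x1 n.+2)`_j.+1 = (a (n.+1)%:Z)^-1 * ((psi x0 x1 n.+1)`_j - b (n.+1)%:Z * (psi x0 x1 n.+1)`_j.+1 - a n%:Z * (psi x0 x1 n)`_j.+1).
Proof. by rewrite psiS coefZ !coefB coefMX !coefZ /=. Qed.

Definition phip n := psi 0 1 n.
Definition thetap n := psi 1 0 n.

Definition pr n := \prod_(i < n) a (i.+1)%:Z.
Definition sb n := \sum_(i < n) b (i.+1)%:Z.
Definition qb n := \sum_(i < n) b (i.+1)%:Z ^+ 2.
Definition sa n := \sum_(i < n) a (i.+1)%:Z ^+ 2.
Definition ttb n := (sb n ^+ 2 - qb n) / 2 - sa n.-1.

Lemma pr_gt0 n : 0 < pr n.
Proof. by rewrite /pr; apply: prodr_gt0 => i _. Qed.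

Lemma prS n : pr n.+1 = pr n * a (n.+1)%:Z.
Proof. by rewrite /pr big_ord_recr. Qed.

Lemma phip_lead n : (size (phip n) <= n)%N /\ (size (phip n.+1) <= n.+1)%N /\
   (phip n.+1)`_n = (pr n)^-1.
Proof.
elim: n => [|n [IH1 [IH2 IH3]]].
  by rewrite /phip /psi /= size_poly0 size_poly1 coef1 /pr big_ord0 invr1.
split=> //.
have sz : (size (phip n.+2) <= n.+2)%N.
  apply/leq_sizeP => -[|j] //= hj.
  rewrite /phip psi_coefS.
  have /leq_sizeP -> := IH2; last by [].
  have /leq_sizeP -> := IH2; last by apply: ltnW.
  have /leq_sizeP -> := IH1; last by apply: leq_trans (leqnSn _) (ltnW hj).
  by rewrite !mulr0 !subrr mulr0.
split=> //.
rewrite /phip psi_coefS -/(phip n.+1) IH3.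
have /leq_sizeP -> := IH2; last by [].
have /leq_sizeP -> := IH1; last by apply: leqnSn.
rewrite prS invfM; last first. 
by rewrite !mulr0 !subr0 mulrC.
Qed.

Lemma sbS n : sb n.+1 = sb n + b (n.+1)%:Z. Proof. by rewrite /sb big_ord_recr. Qed.
Lemma qbS n : qb n.+1 = qb n + b (n.+1)%:Z ^+ 2. Proof. by rewrite /qb big_ord_recr. Qed.
Lemma saS n : sa n.+1 = sa n + a (n.+1)%:Z ^+ 2. Proof. by rewrite /sa big_ord_recr. Qed.

Lemma pr_neq0 n : pr n != 0. Proof. by rewrite gt_eqF ?pr_gt0. Qed.

Lemma phip_c1 n : (phip n.+2)`_n = - sb n.+1 / pr n.+1.
Proof.
elim: n => [|n IH].
  rewrite /phip psi_coef0 /sb /pr !big_ord1 /psi /= coef1 coef0 /=.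
  by field; rewrite anz.
rewrite /phip psi_coefS -/(phip n.+2) -/(phip n.+1) IH.
have [_ [_ ->]] := phip_lead n.+1.
have [_ [/leq_sizeP hz _]] := phip_lead n; rewrite hz //.
rewrite (sbS n.+1) (prS n.+1).
have := anz (n.+2)%:Z; have := pr_neq0 n.+1 => h1 h2.
by field; rewrite h1 h2.
Qed.

Lemma phip_c2 n : (phip n.+3)`_n = ttb n.+2 / pr n.+2.
Proof.
elim: n => [|n IH].
  rewrite /phip psi_coef0 -/(phip 2) -/(phip 1) (phip_c1 0).
  rewrite /phip /psi /= coef1 /=.
  rewrite /ttb /sb /qb /sa /pr !big_ord_recr !big_ord0 /=.
  have := anz 1; have := anz 2 => h1 h2.
  by field; rewrite h1 h2.
rewrite /phip psi_coefS -/(phip n.+3) -/(phip n.+2) IH phip_c1.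
have [_ [_ ->]] := phip_lead n.+1.
rewrite /ttb /= (sbS n.+2) (qbS n.+2) (saS n.+1) (prS n.+2) (prS n.+1).
have := anz (n.+2)%:Z; have := anz (n.+3)%:Z; have := pr_neq0 n.+1 => h1 h2 h3.
by field; rewrite h1 h2 h3.
Qed.

Lemma thetap_lead n : (size (thetap n.+1) <= n)%N /\ (size (thetap n.+2) <= n.+1)%N /\
   (thetap n.+2)`_n = - a 0 / pr n.+1.
Proof.
elim: n => [|n [IH1 [IH2 IH3]]].
  have h0 : thetap 1 = 0 by [].
  have h1 : thetap 0 = 1 by [].
  rewrite h0 size_poly0; split => //; split.
    apply/leq_sizeP => -[|j] //= hj.
    by rewrite /thetap psi_coefS -/(thetap 1) -/(thetap 0) h0 h1 !coef0 coef1 /=; ring.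
  rewrite /thetap psi_coef0 -/(thetap 1) -/(thetap 0) h0 h1 coef0 coef1 /pr big_ord1 /=.
  by field; rewrite anz.
split=> //.
have sz : (size (thetap n.+3) <= n.+2)%N.
  apply/leq_sizeP => -[|j] //= hj.
  rewrite /thetap psi_coefS.
  have /leq_sizeP -> := IH2; last by [].
  have /leq_sizeP -> := IH2; last by apply: ltnW.
  have /leq_sizeP -> := IH1; last by lia.
  by rewrite !mulr0 !subrr mulr0.
split=> //.
rewrite /thetap psi_coefS -/(thetap n.+2) IH3.
have /leq_sizeP -> := IH2; last by [].
have /leq_sizeP -> := IH1; last by apply: leqnSn.
rewrite (prS n.+1).
have := anz (n.+2)%:Z; have := pr_neq0 n.+1 => h1 h2.
by field; rewrite h1 h2.
Qed.

Lemma phip_eval lam n : (phip n).[lam] = jphi a b lam n.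
Proof. by have := (psi_eval 0 1 lam n).1; rewrite polyC0 polyC1. Qed.
Lemma thetap_eval lam n : (thetap n).[lam] = jtheta a b lam n.
Proof. by have := (psi_eval 1 0 lam n).1; rewrite polyC0 polyC1. Qed.

Definition Dp q := phip q.+1 + thetap q.

Lemma Dp_eval q lam : (Dp q).[lam] = discr a b q lam.
Proof. by rewrite /Dp hornerD phip_eval thetap_eval. Qed.

Lemma Dp_size k : (size (Dp k.+2) <= k.+3)%N.
Proof.
rewrite /Dp; apply: leq_trans (size_polyD _ _) _; rewrite geq_max.
have [_ [h _]] := phip_lead k.+2; have [_ [h' _]] := thetap_lead k.
rewrite h /=. exact: (leq_trans h' (leqW (leqnSn _))).
Qed.

Lemma Dp_c0 k : (Dp k.+2)`_k.+2 = (pr k.+2)^-1.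
Proof.
rewrite /Dp coefD; have [_ [_ ->]] := phip_lead k.+2.
have [_ [/leq_sizeP hz _]] := thetap_lead k.
by rewrite hz ?addr0.
Qed.

Lemma Dp_c1 k : (Dp k.+2)`_k.+1 = - sb k.+2 / pr k.+2.
Proof.
rewrite /Dp coefD phip_c1.
have [_ [/leq_sizeP hz _]] := thetap_lead k.
by rewrite hz ?addr0.
Qed.

Lemma Dp_c2 k : (Dp k.+2)`_k = ttb k.+2 / pr k.+2 - a 0 / pr k.+1.
Proof.
rewrite /Dp coefD phip_c2.
by have [_ [_ ->]] := thetap_lead k; rewrite mulNr.
Qed.

Lemma jrec x0 x1 lam n : (jacobi_pair a b lam x0 x1 n.+2).1 =
  ((lam - b (n.+1)%:Z) * (jacobi_pair a b lam x0 x1 n.+1).1 - a n%:Z * (jacobi_pair a b lam x0 x1 n).1) / a (n.+1)%:Z.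
Proof. by []. Qed.

Lemma wronsk lam n : jtheta a b lam n * jphi a b lam n.+1 - jtheta a b lam n.+1 * jphi a b lam n = a 0 / a n%:Z.
Proof.
elim: n => [|n IH].
  by rewrite /jtheta /jphi /= mul1r mulr0 subr0 divff // anz.
rewrite /jtheta /jphi !jrec -/(jtheta a b lam n.+1) -/(jphi a b lam n.+1).
rewrite -/(jtheta a b lam n) -/(jphi a b lam n).
have -> : jtheta a b lam n.+1 * (((lam - b n.+1) * jphi a b lam n.+1 - a n * jphi a b lam n) / a n.+1) -
  ((lam - b n.+1) * jtheta a b lam n.+1 - a n * jtheta a b lam n) / a n.+1 * jphi a b lam n.+1
  = a n / a n.+1 * (jtheta a b lam n * jphi a b lam n.+1 - jtheta a b lam n.+1 * jphi a b lam n).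
  by field; rewrite anz.
rewrite IH.
by field; rewrite !anz.
Qed.
End Poly.

Section Helpers.
Variable R : realType.

Lemma fin_choice (P : nat -> R -> Prop) n :
  (forall j, (j < n)%N -> exists x, P j x) -> exists f : nat -> R, forall j, (j < n)%N -> P j (f j).
Proof.
elim: n => [|n IH] h; first by exists (fun _ => 0).
have [f hf] : exists f : nat -> R, forall j, (j < n)%N -> P j (f j).
  by apply: IH => j hj; apply: h; lia.
have [x hx] := h n (ltnSn n).
exists (fun j => if j == n then x else f j) => j hj.
case: eqP => [->//|/eqP hjn]; apply: hf; lia.
Qed.

Lemma incr_gen (z : nat -> R) n : (forall k, (k.+1 < n)%N -> z k < z k.+1) ->
  forall i j, (i < j < n)%N -> z i < z j.
Proof.
move=> h i j /andP[hij hjn].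
elim: j hij hjn => [//|j IH] hij hjn.
have [->|hlt] := eqVneq i j; first by apply: h.
apply: lt_trans (IH _ _) (h _ hjn); lia.
Qed.

Lemma incr_le (z : nat -> R) n : (forall i j, (i < j < n)%N -> z i < z j) ->
  forall i j, (i <= j < n)%N -> z i <= z j.
Proof.
move=> h i j /andP[hij hjn]; have [->//|hne] := eqVneq i j.
by apply/ltW/h; rewrite hjn andbT ltn_neqAle hne.
Qed.

Lemma sign_sq m : (-1) ^+ m * (-1) ^+ m = 1 :> R.
Proof. by rewrite -expr2 -exprM mulnC exprM expr2 mulrNN mulr1 expr1n. Qed.

Lemma signS m : (-1) ^+ m.+1 = - (-1) ^+ m :> R.
Proof. by rewrite exprS mulN1r. Qed.

Lemma opp_sign m (x y : R) : 0 < (-1) ^+ m * x -> 0 < (-1) ^+ m.+1 * y -> x * y < 0.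
Proof.
rewrite signS; have := sign_sq m; move: ((-1) ^+ m) => e he h1 h2.
have : 0 < ((e * x) * (- e * y)) by apply: mulr_gt0.
have -> : e * x * (- e * y) = - (e * e) * (x * y) by ring.
by rewrite he mulN1r oppr_gt0.
Qed.

Lemma pinf (p : {poly R}) : 0 < lead_coef p -> forall y, exists x, y <= x /\ 0 < p.[x].
Proof.
move=> hl y; have [N hN] := poly_pinfty_gt_lc hl.
exists (Num.max y N); split; first by rewrite le_max lexx.
by apply: lt_le_trans hl (hN _ _); rewrite le_max lexx orbT.
Qed.

Lemma minf (p : {poly R}) n : size p = n.+1 -> 0 < lead_coef p ->
  forall y, exists x, x <= y /\ 0 < (-1) ^+ n * p.[x].
Proof.
move=> hs hl y.
pose p' := ((-1) ^+ n) *: (p \Po (- 'X)).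
have hl' : lead_coef p' = lead_coef p.
  rewrite /p' lead_coefZ lead_coef_comp; last by rewrite size_polyN size_polyX.
  by rewrite lead_coefN lead_coefX hs /= mulrCA sign_sq mulr1.
rewrite -hl' in hl; have [x [hx1 hx2]] := pinf hl (- y).
exists (- x); split; first by rewrite lerNl.
by move: hx2; rewrite /p' hornerZ horner_comp hornerN hornerX.
Qed.

Lemma poly_fact (p : {poly R}) n (z : nat -> R) : size p = n.+1 ->
  (forall i j, (i < j < n)%N -> z i < z j) -> (forall k, (k < n)%N -> root p (z k)) ->
  forall x, p.[x] = lead_coef p * \prod_(k < n) (x - z k).
Proof.
move=> hs hz hr x.
have hall : all (root p) (mkseq z n).
  by apply/allP => y /mapP[k]; rewrite mem_iota add0n => /hr hk ->.
have huniq : poly.uniq_roots (mkseq z n).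
  rewrite uniq_rootsE map_inj_in_uniq ?iota_uniq // => i j.
  rewrite !mem_iota !add0n => hi hj hij.
  case: (ltngtP i j) => // hlt; exfalso.
    have : z i < z j. apply: hz. lia. by rewrite hij ltxx.
  have : z j < z i. apply: hz. lia. by rewrite hij ltxx.
have [r hr'] := uniq_roots_prod_XsubC hall huniq.
have pn0 : p != 0 by rewrite -size_poly_eq0 hs.
have sprod : size (\prod_(z0 <- mkseq z n) ('X - z0%:P)) = n.+1.
  by rewrite size_prod_XsubC size_mkseq.
have rn0 : r != 0 by apply: contraNneq pn0 => r0; rewrite hr' r0 mul0r.
have sr : size r = 1%N.
  have := hs; rewrite hr' size_mul ?sprod //; last by rewrite -size_poly_eq0 sprod.
  by rewrite addnS /= => h; apply/eqP; rewrite -(eqn_add2r n) h add1n eqxx.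
have hr1 : r = (lead_coef p)%:P.
  rewrite hr' lead_coefM (monicP (monic_prod_XsubC _ _ _)) mulr1.
  have -> : lead_coef r = r`_0 by rewrite lead_coefE sr.
  by apply: size1_polyC; rewrite sr.
rewrite {1}hr' hr1 hornerCM horner_prod.
have hi : iota 0 n = index_iota 0 n by rewrite /index_iota subn0.
rewrite big_map hi big_mkord; congr (_ * _); apply: eq_bigr => i _; rewrite hornerXsubC. by [].
Qed.

Lemma prod_sign (f : nat -> R) n j : (j <= n)%N ->
  (forall k, (k < j)%N -> 0 < f k) -> (forall k, (j <= k < n)%N -> f k < 0) ->
  0 < (-1) ^+ (n - j) * \prod_(k < n) f k.
Proof.
move=> hjn hpos hneg.
have [m hm] : exists m, n = (j + m)%N by exists (n - j)%N; lia.
subst n.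
rewrite addKn.
clear hjn; elim: m hneg => [|m IH] hneg.
  rewrite addn0 expr0 mul1r; apply: prodr_gt0 => k _; exact: hpos.
rewrite addnS big_ord_recr /= signS.
have -> : - (-1) ^+ m * (\prod_(i < j + m) f i * f (j + m)%N) =
   ((-1) ^+ m * \prod_(i < j + m) f i) * (- f (j + m)%N) by ring.
apply: mulr_gt0; first by apply: IH => k hk; apply: hneg; lia.
by rewrite oppr_gt0; apply: hneg; lia.
Qed.
End Helpers.

Section G.
Variable R : realType.

Lemma sign_sub n i : (i <= n)%N -> (-1) ^+ n * (-1) ^+ i = (-1) ^+ (n - i) :> R.
Proof. by move=> hi; rewrite -{1}(subnK hi) exprD -mulrA sign_sq mulr1. Qed.

Lemma sum_sq_exp (f : nat -> R) c n :
  \sum_(i < n) (f i - c) ^+ 2 = \sum_(i < n) f i ^+ 2 - 2 * c * \sum_(i < n) f i + n%:R * c ^+ 2.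
Proof.
elim: n => [|n IH]; first by rewrite !big_ord0 mul0r; ring.
by rewrite !big_ord_recr /= IH mulrS; ring.
Qed.

Lemma period_ext (f : int -> R) (q : nat) (c : R) : (0 < q)%N ->
  (forall n, f (n + q%:Z) = f n) -> (forall i : nat, (i < q)%N -> f (i.+1)%:Z = c) ->
  forall n, f n = c.
Proof.
move=> hq hp hc.
have hpos m x : f (x + (m%:Z * q%:Z)) = f x.
  elim: m x => [|m IH] x; first by rewrite mul0r addr0.
  by rewrite -[m.+1]addn1 PoszD mulrDl mul1r addrA hp IH.
have hall d x : f (x + d * q%:Z) = f x.
  case: d => m; first exact: hpos.
  have := hpos m.+1 (x + Negz m * q%:Z).
  by rewrite NegzE mulNr -addrA addNr addr0 => <-.
move=> n.
have hq0 : (q%:Z != 0) by rewrite eqz_nat -lt0n.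
have := divz_eq (n - 1) q%:Z.
set d := ((n - 1) %/ q%:Z)%Z; set r := ((n - 1) %% q%:Z)%Z => hn.
have hr0 : 0 <= r by apply: modz_ge0.
have hrq : r < q%:Z by apply: ltz_pmod; rewrite ltz_nat.
have [r' hr'] : exists r' : nat, r = r'%:Z by exists `|r|%N; rewrite gez0_abs.
have -> : n = (r'.+1)%:Z + d * q%:Z.
  rewrite -[r'.+1]addn1 PoszD -hr' addrC addrA -hn; ring.
rewrite hall hc //.
by move: hrq; rewrite hr' ltz_nat.
Qed.
End G.

Section Inter.
Variable R : realType.
Variables (a b : int -> R).
Hypothesis ha : forall n, 0 < a n.

Lemma phip_sz n : size (phip a b n.+1) = n.+1 /\ lead_coef (phip a b n.+1) = (pr a n)^-1.
Proof.
have [_ [hs hc]] := phip_lead a b n.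
have hsz : size (phip a b n.+1) = n.+1.
  apply/eqP; rewrite eqn_leq hs /= ltnNge; apply/negP => /leq_sizeP h.
  by have := h n (leqnn n); rewrite hc; apply/eqP; rewrite invr_eq0 pr_neq0.
by split => //; rewrite lead_coefE hsz.
Qed.

Lemma lead_pos n : 0 < lead_coef (phip a b n.+1).
Proof. by rewrite (phip_sz n).2 invr_gt0 pr_gt0. Qed.

Definition Jinv n := exists z : nat -> R, (forall i j, (i < j < n)%N -> z i < z j) /\
  (forall k, (k < n)%N -> jphi a b (z k) n.+1 = 0 /\ 0 < (-1) ^+ (n.-1 - k) * jphi a b (z k) n).

Lemma anz' n : a n != 0. Proof. by rewrite gt_eqF. Qed.

Lemma interlace n : Jinv n.+1.
Proof.
elim: n => [|n [z [hz hzk]]].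
  exists (fun _ => b 1); split; first by move=> i j; lia.
  move=> k _; rewrite /jphi /= subrr !mul0r mulr0 subr0 mul0r expr0 mul1r; split => //.
set N := n.+1 in hz hzk *.
have h2 k : (k < N)%N -> 0 < (-1) ^+ (N - k) * jphi a b (z k) N.+2.
  move=> hk; have [hr hs] := hzk k hk.
  have eN : (N - k)%N = (N.-1 - k).+1 by rewrite /N; lia.
  rewrite eN signS /jphi jrec -/(jphi a b (z k) N.+1) -/(jphi a b (z k) N) hr.
  have -> : - (-1) ^+ (N.-1 - k) * (((z k - b N.+1) * 0 - a N * jphi a b (z k) N) / a N.+1)
     = (a N / a N.+1) * ((-1) ^+ (N.-1 - k) * jphi a b (z k) N) by field; rewrite anz'.
  by apply: mulr_gt0 => //; apply: divr_gt0.
set P2 := phip a b N.+2.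
have hP2 x : P2.[x] = jphi a b x N.+2 by rewrite phip_eval.
have [L [hL1 hL2]] := minf (phip_sz N.+1).1 (lead_pos N.+1) (z 0%N).
have [U [hU1 hU2]] := pinf (lead_pos N.+1) (z N.-1).
have hw : forall j, (j < N.+1)%N -> exists w, jphi a b w N.+2 = 0 /\
    ((0 < j)%N -> z j.-1 < w) /\ ((j < N)%N -> w < z j).
  move=> j hj.
  have [lo [hi [hlohi [hlo [hhi hprod]]]]] : exists lo hi, lo <= hi /\ ((0 < j)%N -> z j.-1 = lo) /\
      ((j < N)%N -> z j = hi) /\ P2.[lo] * P2.[hi] < 0.
    case: j hj => [|j] hj.
      exists L, (z 0%N); split => //; split => //; split => //.
      rewrite mulrC hP2; apply: (@opp_sign _ N); first by have := h2 0%N isT; rewrite subn0.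
      exact: hL2.
    case: (ltnP j.+1 N) => hjN.
      exists (z j), (z j.+1); split; first by apply/ltW/hz; lia.
      split => //; split => //.
      rewrite mulrC !hP2; apply: (@opp_sign _ (N - j.+1)); first by apply: h2.
      have -> : (N - j.+1).+1 = (N - j)%N by lia.
      by apply: h2; lia.
    have hjN' : j = N.-1 by rewrite /N in hjN hj *; lia.
    exists (z j), U; split; first by rewrite hjN'.
    split => //; split; first by move=> hh; rewrite /N in hjN hh; lia.
    rewrite mulrC; apply: (@opp_sign _ 0); first by rewrite expr0 mul1r.
    have := h2 j; rewrite hP2.
    have -> : (N - j)%N = 1%N by rewrite /N in hjN hj *; lia.
    by apply; lia.
  have [w hw1 hw2] := poly_ivtoo hlohi hprod.
  exists w; split; first by rewrite -hP2; apply/eqP.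
  move: hw1; rewrite in_itv /= => /andP[h1 h3].
  by split => [hj0|hjN]; [rewrite hlo | rewrite hhi].
have [f hf] := fin_choice hw.
have hfz j : (j < N)%N -> f j < z j by move=> hj; apply: (hf j (ltnW hj)).2.2.
have hzf j : (0 < j < N.+1)%N -> z j.-1 < f j by move=> /andP[h0 hj]; apply: (hf j hj).2.1.
exists f; split.
  move=> i j /andP[hij hjN].
  apply: lt_trans (hfz i _) _; first by lia.
  apply: le_lt_trans (hzf j _); last by lia.
  by apply: (incr_le hz); lia.
move=> k hk; split; first by apply: (hf k hk).1.
have hN1 : (n.+2.-1 - k)%N = (N - k)%N by rewrite /N.
rewrite hN1 -phip_eval.
have hroot i : (i < N)%N -> root (phip a b N.+1) (z i).
  by move=> hi; apply/rootP; rewrite phip_eval (hzk i hi).1.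
rewrite (poly_fact (phip_sz N).1 hz hroot) mulrCA.
apply: mulr_gt0; first by apply: lead_pos.
apply: (@prod_sign _ (fun i => f k - z i)); first by lia.
  move=> i hi; rewrite subr_gt0; apply: le_lt_trans (hzf k _); last by lia.
  by apply: (incr_le hz); lia.
move=> i /andP[hki hiN]; rewrite subr_lt0; apply: lt_le_trans (hfz k _) _; first by lia.
by apply: (incr_le hz); lia.
Qed.
End Inter.

Section Cheb.
Variable R : realType.
Variables (m h : R).

Fixpoint Tpair (n : nat) : {poly R} * {poly R} :=
  match n with
  | 0%N => (2%:P, 'X - m%:P)
  | n'.+1 => let p := Tpair n' in (p.2, ('X - m%:P) * p.2 - (h ^+ 2) *: p.1)
  end.
Definition T n := (Tpair n).1.

Lemma TS n : T n.+2 = ('X - m%:P) * T n.+1 - (h ^+ 2) *: T n.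
Proof. by []. Qed.

Lemma T_coefS n j : (T n.+2)`_j.+1 = (T n.+1)`_j - m * (T n.+1)`_j.+1 - h ^+ 2 * (T n)`_j.+1.
Proof. by rewrite TS mulrBl !coefB coefXM coefCM !coefZ /=. Qed.
Lemma T_coef0 n : (T n.+2)`_0 = - m * (T n.+1)`_0 - h ^+ 2 * (T n)`_0.
Proof. by rewrite TS mulrBl !coefB coefXM coefCM !coefZ /=; ring. Qed.

Lemma T0 : T 0 = 2%:P. Proof. by []. Qed.
Lemma T1 : T 1 = 'X - m%:P. Proof. by []. Qed.

Lemma T_size n : (size (T n) <= n.+1)%N /\ (size (T n.+1) <= n.+2)%N /\ (T n.+1)`_n.+1 = 1.
Proof.
elim: n => [|n [IH1 [IH2 IH3]]].
  rewrite T0 T1 size_polyC size_XsubC coefB coefX coefC /= subr0; split => //.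
  by case: (2 != 0).
split => //.
have sz : (size (T n.+2) <= n.+3)%N.
  apply/leq_sizeP => -[|j] //= hj.
  rewrite T_coefS.
  have /leq_sizeP -> := IH2; last by lia.
  have /leq_sizeP -> := IH2; last by lia.
  have /leq_sizeP -> := IH1; last by lia.
  by rewrite !mulr0 !subrr.
split => //.
rewrite T_coefS IH3.
have /leq_sizeP -> := IH2; last by lia.
have /leq_sizeP -> := IH1; last by lia.
by rewrite !mulr0 !subr0.
Qed.

Lemma T_c1 n : (T n.+1)`_n = - (n.+1)%:R * m.
Proof.
elim: n => [|n IH]; first by rewrite T1 coefB coefX coefC /= sub0r mulN1r.
rewrite T_coefS IH (T_size n).2.2.
have [h1 _] := T_size n.
have /leq_sizeP -> := h1; last by lia.
rewrite [in RHS]mulrS; ring.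
Qed.

Lemma T_c2 n : (T n.+2)`_n = (n.+2)%:R * (n.+1)%:R / 2 * m ^+ 2 - (n.+2)%:R * h ^+ 2.
Proof.
elim: n => [|n IH].
  rewrite T_coef0 T1 T0 coefB coefX coefC /= coefC /=.
  have h2 : (2 : R) != 0 by rewrite pnatr_eq0.
  by field.
rewrite T_coefS IH T_c1 (T_size n).2.2.
rewrite !mulrS.
have h2 : (2 : R) != 0 by rewrite pnatr_eq0.
by field.
Qed.

Lemma cos_rec (k : nat) (t : R) :
  cos ((k.+2)%:R * t) = 2 * cos t * cos ((k.+1)%:R * t) - cos (k%:R * t).
Proof.
have e1 : (k.+2)%:R * t = (k.+1)%:R * t + t by rewrite (mulrS _ k.+1); ring.
have e2 : k%:R * t = (k.+1)%:R * t - t by rewrite (mulrS _ k); ring.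
rewrite e1 e2 cosD cosB; ring.
Qed.

Lemma T_cos (t : R) n : (T n).[m + 2 * h * cos t] = 2 * h ^+ n * cos (n%:R * t) /\
  (T n.+1).[m + 2 * h * cos t] = 2 * h ^+ n.+1 * cos ((n.+1)%:R * t).
Proof.
elim: n => [|n [IH1 IH2]].
  rewrite T0 T1 !hornerE /= cos0 mulr1 expr1; split => //; ring.
split => //.
rewrite TS hornerD hornerN hornerZ hornerM hornerXsubC IH1 IH2 cos_rec.
rewrite !exprS; ring.
Qed.

Hypothesis hpos : 0 < h.

Lemma T_bound n x : m - 2 * h <= x <= m + 2 * h -> `|(T n).[x]| <= 2 * h ^+ n.
Proof.
move=> /andP[h1 h2].
set y := (x - m) / (2 * h).
have h2h : 0 < 2 * h by rewrite mulr_gt0.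
have hy : y \in `[(-1), 1].
  rewrite in_itv /= /y ler_pdivlMr // ler_pdivrMr //; apply/andP; split; lra.
have -> : x = m + 2 * h * cos (acos y).
  by rewrite acosK // /y mulrC divfK ?gt_eqF // addrC subrK.
rewrite (T_cos _ n).1 normrM ger0_norm; last by rewrite mulr_ge0 ?exprn_ge0 ?ltW.
by rewrite -{2}[2 * h ^+ n]mulr1 ler_wpM2l ?cos_max // mulr_ge0 ?exprn_ge0 ?ltW.
Qed.

Lemma cos_npi (n : nat) : cos (n%:R * pi) = (-1) ^+ n :> R.
Proof.
elim: n => [|n IH]; first by rewrite mul0r cos0 expr0.
by rewrite mulrS mulrDl mul1r addrC cosDpi IH signS.
Qed.

Definition cheb q i := m + 2 * h * cos ((q - i)%:R * pi / q%:R).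

Lemma cheb_val q i : (0 < q)%N -> (i <= q)%N -> (T q).[cheb q i] = 2 * h ^+ q * (-1) ^+ (q - i).
Proof.
move=> hq hi; rewrite /cheb (T_cos _ q).1.
congr (_ * _); rewrite -cos_npi; congr cos.
have hq0 : (q%:R : R) != 0 by rewrite pnatr_eq0 -lt0n.
by field.
Qed.

Lemma cheb_in q i : (i <= q)%N -> m - 2 * h <= cheb q i <= m + 2 * h.
Proof.
move=> hi; rewrite /cheb; have c1 := @cos_geN1 R ((q - i)%:R * pi / q%:R); have c2 := @cos_le1 R ((q - i)%:R * pi / q%:R).
have h2h : 0 < 2 * h by rewrite mulr_gt0.
move: c1 c2; set c := cos _ => c1 c2.
have hc1 : 0 <= 2 * h * (c + 1) by apply: mulr_ge0; [apply: ltW | lra].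
have hc2 : 0 <= 2 * h * (1 - c) by apply: mulr_ge0; [apply: ltW | lra].
apply/andP; split; lra.
Qed.

Lemma cheb_incr q i j : (i < j <= q)%N -> cheb q i < cheb q j.
Proof.
move=> /andP[hij hjq]; rewrite /cheb ltrD2l ltr_pM2l ?mulr_gt0 //.
have hq : (0 < q%:R :> R) by rewrite ltr0n; lia.
have hpi : (0:R) < pi := @pi_gt0 R.
have hang k : (k <= q)%N -> (q - k)%:R * (pi : R) / q%:R \in `[0, (pi : R)].
  move=> hk; rewrite in_itv /=; apply/andP; split.
    by rewrite divr_ge0 // ?mulr_ge0 // ltW.
  rewrite ler_pdivrMr // mulrC ler_pM2l // ler_nat; lia.
rewrite (@ltr_cos R) ?hang //; last by lia.
rewrite ltr_pM2r ?invr_gt0 // ltr_pM2r // ltr_nat; lia.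
Qed.
End Cheb.

Section Alt.
Variable R : realType.

Lemma alt_zero n (p : {poly R}) (s : nat -> R) (e : R) : e != 0 -> (size p <= n)%N ->
  (forall i, (i < n)%N -> s i < s i.+1) ->
  (forall i, (i <= n)%N -> 0 <= e * (-1) ^+ i * p.[s i]) -> p = 0.
Proof.
elim: n p s e => [|n IH] p s e he hs hinc halt.
  by apply/eqP; rewrite -size_poly_leq0.
have hsi := @incr_gen _ s n.+2 hinc.
have hs01 : s 0%N < s 1%N by apply: hinc.
have [r [hr [hr0 [hr1 hcase]]]] : exists r, root p r /\ s 0%N <= r /\ r <= s 1%N /\
   (r = s 0%N \/ (s 0%N < r /\ 0 < e * p.[s 0%N])).
  have [h0|h0] := boolP (root p (s 0%N)).
    by exists (s 0%N); split => //; split => //; split; [apply: ltW | left].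
  have hp0 : p.[s 0%N] != 0 by [].
  have hpos : 0 < e * p.[s 0%N].
    have := halt 0%N isT; rewrite expr0 mulr1 le_eqVlt => /orP[|//].
    by rewrite eq_sym mulf_eq0 (negbTE he) (negbTE hp0).
  have hneg : 0 <= - e * p.[s 1%N] by have := halt 1%N isT; rewrite expr1 mulrN1.
  have hprod : p.[s 0%N] * p.[s 1%N] <= 0.
    have he2 : 0 < e * e by rewrite lt_def mulf_neq0 // -expr2 sqr_ge0.
    nra.
  have [x hx hrx] := polyrcf.poly_ivt (ltW hs01) hprod.
  move: hx; rewrite in_itv /= => /andP[hx0 hx1].
  exists x; split => //; split => //; split => //; right; split => //.
  rewrite lt_def hx0 andbT; apply: contraNneq h0 => <-; exact: hrx.
set d := 'X - r%:P.
have dn0 : d != 0 by rewrite /d polyXsubC_eq0.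
set p' := p %/ d.
have hp : p = p' * d by rewrite divpK // /d -root_factor_theorem.
have hev x : p.[x] = p'.[x] * (x - r) by rewrite {1}hp hornerM hornerXsubC.
have hsz : (size p' <= n)%N by rewrite size_divp // /d size_XsubC succnK subn1; move: hs; case: (size p).
suff hp0 : p' = 0 by rewrite hp hp0 mul0r.
case: hcase => [hr_eq | [hrlt hpos]].
  apply: (IH p' (fun i => s i.+1) (- e)); first by rewrite oppr_eq0.
  - done.
  - by move=> i hi; apply: hinc.
  move=> i hi; have := halt i.+1 hi.
  have hpos : 0 < s i.+1 - r by rewrite subr_gt0 hr_eq; apply: hsi; lia.
  rewrite hev signS => h.
  have -> : - e * (-1) ^+ i * p'.[s i.+1] = (e * - (-1) ^+ i * (p'.[s i.+1] * (s i.+1 - r))) / (s i.+1 - r).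
    by field; rewrite gt_eqF.
  by apply: divr_ge0 => //; apply: ltW.
apply: (IH p' (fun i => if i == 0%N then s 0%N else s i.+1) (- e)); first by rewrite oppr_eq0.
- done.
- move=> i hi; case: i hi => [|i] hi /=; first by apply: hsi; lia.
  by apply: hinc.
move=> [|i] hi /=.
  rewrite expr0 mulr1.
  have hneg : s 0%N - r < 0 by rewrite subr_lt0.
  have := hpos; rewrite hev => h.
  have -> : - e * p'.[s 0%N] = (e * (p'.[s 0%N] * (s 0%N - r))) / (- (s 0%N - r)).
    by field; rewrite lt_eqF.
  by apply: divr_ge0; [apply: ltW | rewrite oppr_ge0 ltW].
have := halt i.+2 hi.
have hpos' : 0 < s i.+2 - r.
  rewrite subr_gt0; apply: le_lt_trans hr1 _; apply: hsi; lia.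
rewrite hev !signS opprK => h.
have -> : - e * - (-1) ^+ i * p'.[s i.+2] = (e * (-1) ^+ i * (p'.[s i.+2] * (s i.+2 - r))) / (s i.+2 - r).
  by field; rewrite gt_eqF.
by apply: divr_ge0 => //; apply: ltW.
Qed.
End Alt.

Section Main.
Variable R : realType.
Variable k : nat.
Variables (a b : int -> R) (lamp lamm : nat -> R).
Hypothesis ha : forall n, 0 < a n.
Hypothesis hpa : forall n, a (n + (k.+2)%:Z) = a n.
Hypothesis hpb : forall n, b (n + (k.+2)%:Z) = b n.
Hypothesis hband : forall m : nat, (1 <= m <= k.+2)%N -> lamp m.-1 < lamm m.
Hypothesis hgap : forall m : nat, (1 <= m <= k.+1)%N -> lamm m <= lamp m.
Hypothesis hmin : forall p : nat, (1 <= p < k.+2)%N ->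
      ~ (forall n, a (n + p%:Z) = a n /\ b (n + p%:Z) = b n).
Hypothesis hspec : forall x : R, `|discr a b k.+2 x| <= 2 <->
      exists m : nat, (1 <= m <= k.+2)%N /\ lamp m.-1 <= x <= lamm m.

Local Notation al := (lamp 0%N).
Local Notation be := (lamm k.+2).
Local Notation D := (discr a b k.+2).
Local Notation Dk := (Dp a b k.+2).

Lemma chain_p j : (j <= k.+1)%N -> al <= lamp j.
Proof.
elim: j => [|j IH] hj //.
have h1 : lamp j < lamm j.+1 by have := @hband j.+1; apply; lia.
have h2 : lamm j.+1 <= lamp j.+1 by apply: hgap; lia.
by apply: le_trans (IH (ltnW hj)) _; apply: ltW; apply: lt_le_trans h1 h2.
Qed.

Lemma chain_m m : (1 <= m <= k.+2)%N -> lamm m <= be.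
Proof.
move=> hm; have [d hd] : exists d, m = (k.+2 - d)%N by exists (k.+2 - m)%N; lia.
have hdk : (d <= k.+1)%N by lia.
rewrite hd; clear hd hm; elim: d hdk => [|d IH] hd; first by rewrite subn0.
apply: le_trans (IH (ltnW hd)).
have e : (k.+2 - d = (k.+2 - d.+1).+1)%N by lia.
rewrite e; apply: le_trans (@hgap (k.+2 - d.+1) _) _; first by lia.
apply: ltW; have := @hband (k.+2 - d.+1).+1; rewrite /=; apply; lia.
Qed.

Lemma al_lt_be : al < be.
Proof. by apply: lt_le_trans (@hband 1%N _) (@chain_m 1%N _). Qed.

Lemma in_band x : `|D x| <= 2 -> al <= x <= be.
Proof.
move=> /hspec [m [hm /andP[h1 h2]]]; apply/andP; split.
  by apply: le_trans (chain_p _) h1; lia.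
by apply: le_trans h2 (chain_m _).
Qed.

Lemma Dk_sz : size Dk = k.+3 /\ lead_coef Dk = (pr a k.+2)^-1.
Proof.
have hs := Dp_size b ha k; have hc := Dp_c0 b ha k.
have hsz : size Dk = k.+3.
  apply/eqP; rewrite eqn_leq hs /= ltnNge; apply/negP => /leq_sizeP h.
  by have := h k.+2 (leqnn _); rewrite hc; apply/eqP; rewrite invr_eq0 (pr_neq0 ha).
by split => //; rewrite lead_coefE hsz.
Qed.

Lemma Dk_lead : 0 < lead_coef Dk.
Proof. by rewrite Dk_sz.2 invr_gt0 (pr_gt0 ha). Qed.

Lemma shiftC (c : R) : size (Dk - c%:P) = k.+3 /\ lead_coef (Dk - c%:P) = lead_coef Dk.
Proof.
have hs : (size (- c%:P) < size Dk)%N by rewrite size_polyN Dk_sz.1 (leq_ltn_trans (size_polyC_leq1 _)).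
by rewrite size_polyDl // lead_coefDl // Dk_sz.1.
Qed.

Lemma norm_sign (x : R) n : `|(-1) ^+ n * x| = `|x|.
Proof. by rewrite normrM normrX normrN normr1 expr1n mul1r. Qed.

Lemma D_al : 2 <= (-1) ^+ k.+2 * D al.
Proof.
rewrite leNgt; apply/negP => hlt.
set Q := Dk - (2 * (-1) ^+ k.+2)%:P.
have hQ x : (-1) ^+ k.+2 * Q.[x] = (-1) ^+ k.+2 * D x - 2.
  rewrite /Q hornerD hornerN hornerC Dp_eval mulrBr; congr (_ - _).
  by rewrite mulrCA sign_sq mulr1.
have hl : 0 < lead_coef Q by rewrite (shiftC _).2 Dk_lead.
have [x [hx1 hx2]] := minf (shiftC _).1 hl (al - 1).
have hprod : Q.[x] * Q.[al] < 0.
  apply: (@opp_sign _ k.+2) => //; rewrite signS mulNr hQ oppr_gt0; lra.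
have hxal : x <= al by lra.
have [r hr hroot] := poly_ivtoo hxal hprod.
move: hr; rewrite in_itv /= => /andP[_ hral].
have hDr : (-1) ^+ k.+2 * D r = 2 by have := hQ r; move/rootP: hroot => ->; rewrite mulr0; lra.
have : `|D r| <= 2 by rewrite -(norm_sign _ k.+2) hDr ger0_norm.
by move/in_band => /andP[h _]; move: hral; rewrite ltNge h.
Qed.

Lemma D_be : 2 <= D be.
Proof.
rewrite leNgt; apply/negP => hlt.
set Q := Dk - 2%:P.
have hQ x : Q.[x] = D x - 2 by rewrite /Q hornerD hornerN hornerC Dp_eval.
have hl : 0 < lead_coef Q by rewrite (shiftC _).2 Dk_lead.
have [x [hx1 hx2]] := pinf hl (be + 1).
have hprod : Q.[be] * Q.[x] < 0 by rewrite pmulr_llt0 // hQ; lra.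
have hxbe : be <= x by lra.
have [r hr hroot] := poly_ivtoo hxbe hprod.
move: hr; rewrite in_itv /= => /andP[hber _].
have hDr : D r = 2 by have := hQ r; move/rootP: hroot => ->; lra.
have : `|D r| <= 2 by rewrite hDr ger0_norm.
by move/in_band => /andP[_ h]; move: hber; rewrite ltNge h.
Qed.

Lemma uv_ge2 (u v : R) : 0 < u -> u * v = 1 -> 2 <= u + v.
Proof. move=> hu huv; have := sqr_ge0 (u - 1); nra. Qed.

Lemma a_q : a (k.+2)%:Z = a 0.
Proof. by have := hpa 0; rewrite add0r. Qed.

Lemma alt_pts : exists s : nat -> R, (forall i, (i < k.+2)%N -> s i < s i.+1) /\
  (forall i, (i <= k.+2)%N -> al <= s i <= be) /\
  (forall i, (i <= k.+2)%N -> 2 <= (-1) ^+ (k.+2 - i) * D (s i)).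
Proof.
have [z [hz hzk]] := interlace b ha k.
have hDz j : (j < k.+1)%N -> 2 <= (-1) ^+ (k.+1 - j) * D (z j).
  move=> hj; have [h0 h1] := hzk j hj.
  rewrite /= in h1.
  have e1 : (k.+1 - j)%N = (k - j).+1 by lia.
  have hu : 0 < (-1) ^+ (k.+1 - j) * jphi a b (z j) k.+3.
    rewrite e1 signS /jphi jrec -/(jphi a b (z j) k.+2) -/(jphi a b (z j) k.+1) h0.
    have -> : - (-1) ^+ (k - j) * (((z j - b k.+2) * 0 - a k.+1 * jphi a b (z j) k.+1) / a k.+2)
       = (a k.+1 / a k.+2) * ((-1) ^+ (k - j) * jphi a b (z j) k.+1).
      by field; rewrite gt_eqF.
    by apply: mulr_gt0 => //; apply: divr_gt0.
  have hw := wronsk b ha (z j) k.+2.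
  rewrite h0 mulr0 subr0 a_q divff ?gt_eqF // in hw.
  rewrite /discr mulrDr.
  move: hu hw; have := sign_sq R (k.+1 - j).
  move: ((-1) ^+ (k.+1 - j)) (jphi a b (z j) k.+3) (jtheta a b (z j) k.+2) => e f t he hu hw.
  have huv : (e * f) * (e * t) = 1 by rewrite mulrACA he mul1r mulrC.
  exact: uv_ge2 hu huv.
have hzi i j : (i <= j < k.+1)%N -> z i <= z j by apply: incr_le.
have hz0 : al < z 0%N.
  rewrite ltNge; apply/negP => hle.
  have h1 := hDz 0%N isT; rewrite subn0 in h1.
  have h2 := D_al.
  have hprod : Dk.[z 0%N] * Dk.[al] <= 0.
    by apply: ltW; apply: (@opp_sign _ k.+1); rewrite !Dp_eval; lra.
  have [r hr hroot] := polyrcf.poly_ivt hle hprod.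
  move: hr; rewrite in_itv /= => /andP[_ hral].
  have hD : D r = 0 by rewrite -Dp_eval; apply/rootP.
  have : al <= r by have := @in_band r; rewrite hD normr0 => /(_ (ler0n _ 2)) /andP[].
  move=> halr; have hr : r = al by apply/eqP; rewrite eq_le hral halr.
  by move: h2; rewrite -hr hD mulr0; lra.
have hzk' : z k < be.
  rewrite ltNge; apply/negP => hle.
  have h1 := hDz k (ltnSn k); rewrite subSnn expr1 in h1.
  have h2 := D_be.
  have hprod : Dk.[be] * Dk.[z k] <= 0 by rewrite !Dp_eval; nra.
  have [r hr hroot] := polyrcf.poly_ivt hle hprod.
  move: hr; rewrite in_itv /= => /andP[hber _].
  have hD : D r = 0 by rewrite -Dp_eval; apply/rootP.
  have : r <= be by have := @in_band r; rewrite hD normr0 => /(_ (ler0n _ 2)) /andP[].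
  move=> hrbe; have hr : r = be by apply/eqP; rewrite eq_le hber hrbe.
  by move: h2; rewrite -hr hD; lra.
exists (fun i => if i == 0%N then al else if i == k.+2 then be else z i.-1).
split; [|split].
- move=> i hi; case: i hi => [|i] hi /=.
    exact: hz0.
  case: eqP => [e|ne]; first by lia.
  case: eqP => [e|ne'].
    by have -> : i = k by lia.
  by apply: hz; lia.
- move=> i hi; case: eqP => [_|ne]; first by rewrite lexx ltW // al_lt_be.
  case: eqP => [_|ne']; first by rewrite lexx andbT ltW // al_lt_be.
  apply/andP; split.
    by apply: ltW; apply: lt_le_trans hz0 (hzi _ _ _); lia.
  by apply: ltW; apply: le_lt_trans (hzi _ _ _) hzk'; lia.
- move=> i hi; case: eqP => [->|ne]; first by rewrite subn0 D_al.
  case: eqP => [->|ne']; first by rewrite subnn expr0 mul1r D_be.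
  have := hDz i.-1 _; rewrite (_ : (k.+1 - i.-1)%N = (k.+2 - i)%N); last by lia.
  by apply; lia.
Qed.

Local Notation A := (geomA a k.+2).

Lemma prod_eq : \prod_(1 <= i < k.+3) a i%:Z = pr a k.+2.
Proof.
rewrite (big_addn 0 _ 1) subn1 /= big_mkord /pr.
by apply: eq_bigr => i _; rewrite addn1.
Qed.

Lemma A_pos : 0 < A.
Proof. by rewrite /geomA prod_eq powR_gt0 // pr_gt0. Qed.

Lemma A_pow : A ^+ k.+2 = pr a k.+2.
Proof.
rewrite /geomA prod_eq -powR_mulrn ?powR_ge0 // -powRrM mulVf ?pnatr_eq0 //.
by rewrite powRr1 // ltW // pr_gt0.
Qed.

Lemma sz_diff (m h : R) : (size (pr a k.+2 *: Dk - T m h k.+2)%R <= k.+2)%N.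
Proof.
have [_ [hT1 hT2]] := T_size m h k.+1.
have [hD _] := Dk_sz.
apply/leq_sizeP => j hj; rewrite coefB coefZ.
case: (ltngtP j k.+2) => [|hgt|->]; first by lia.
  have /leq_sizeP -> : (size Dk <= k.+3)%N by rewrite hD.
  have /leq_sizeP -> := hT1.
  - by rewrite mulr0 subr0.
  - by [].
  - by [].
by rewrite (Dp_c0 b ha k) hT2 mulfV ?pr_neq0 // subrr.
Qed.

Lemma signNZ n : (-1) ^+ n != 0 :> R.
Proof. by rewrite expf_neq0 // oppr_eq0 oner_eq0. Qed.

Lemma goal1 : 2 * A < (be - al) / 2.
Proof.
rewrite ltNge; apply/negP => hle.
set h := (be - al) / 4; set mid := (al + be) / 2.
have hab := al_lt_be.
have hh : 0 < h by rewrite /h divr_gt0 // ?subr_gt0 // ltr0n.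
have hhA : h <= A by rewrite /h; lra.
have hlo : mid - 2 * h = al by rewrite /mid /h; field.
have hhi : mid + 2 * h = be by rewrite /mid /h; field.
have [s [hinc [hin halt]]] := alt_pts.
have hA := A_pow.
have hprpos := pr_gt0 ha k.+2.
have hR0 : pr a k.+2 *: Dk - T mid h k.+2 = 0.
  apply: (@alt_zero _ k.+2 _ s ((-1) ^+ k.+2) (signNZ _) (sz_diff _ _) hinc).
  move=> i hi; rewrite sign_sub // hornerD hornerN hornerZ Dp_eval.
  have h1 := halt i hi.
  have h2 : `|(T mid h k.+2).[s i]| <= 2 * h ^+ k.+2 by apply: (T_bound hh); rewrite hlo hhi; apply: hin.
  have h3 : h ^+ k.+2 <= pr a k.+2.
    by rewrite -hA; apply: lerXn2r => //; rewrite nnegrE ?ltW // A_pos.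
  have h4 : (-1) ^+ (k.+2 - i) * (T mid h k.+2).[s i] <= 2 * h ^+ k.+2.
    by apply: le_trans (ler_norm _) _; rewrite norm_sign.
  have h5 : pr a k.+2 * 2 <= pr a k.+2 * ((-1) ^+ (k.+2 - i) * D (s i)).
    by rewrite ler_wpM2l // ltW.
  rewrite mulrBr mulrCA; lra.
have hPT : pr a k.+2 *: Dk = T mid h k.+2 by apply/eqP; rewrite -subr_eq0 hR0.
have c1 : (pr a k.+2 *: Dk)`_k.+1 = (T mid h k.+2)`_k.+1 by rewrite hPT.
have c2 : (pr a k.+2 *: Dk)`_k = (T mid h k.+2)`_k by rewrite hPT.
rewrite coefZ (Dp_c1 b ha k) (T_c1 mid h k.+1) in c1.
rewrite coefZ (Dp_c2 b ha k) (T_c2 mid h k) in c2.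
have hpr0 := pr_neq0 ha k.+2.
have e1 : pr a k.+2 * (- sb b k.+2 / pr a k.+2) = - sb b k.+2 by field.
have e2 : pr a k.+2 * (ttb a b k.+2 / pr a k.+2 - a 0 / pr a k.+1) = ttb a b k.+2 - a 0 * a k.+2.
  by rewrite (prS a k.+1); field; rewrite (pr_neq0 ha) gt_eqF.
rewrite e1 in c1; rewrite e2 a_q in c2.
have hsb : sb b k.+2 = (k.+2)%:R * mid by lra.
rewrite /ttb /= hsb in c2.
set SA := sa a k.+2.
set V := \sum_(i < k.+2) (b (i.+1)%:Z - mid) ^+ 2.
have hV : V = qb b k.+2 - 2 * mid * sb b k.+2 + (k.+2)%:R * mid ^+ 2 by rewrite /V (sum_sq_exp (fun i : nat => b (i.+1)%:Z)).
have hSA : SA = sa a k.+1 + a 0 ^+ 2 by rewrite /SA saS a_q.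
have key : SA + V / 2 = (k.+2)%:R * h ^+ 2 by rewrite hV hSA hsb; nra.
have hV0 : 0 <= V by apply: sumr_ge0 => i _; apply: sqr_ge0.
pose E := fun i : 'I_k.+2 => a (i.+1)%:Z ^+ 2.
have hagm := @leif_AGM R _ predT E (fun i _ => sqr_ge0 _).
rewrite /= card_ord in hagm.
have hsum : \sum_(i in predT) E i = SA by apply: eq_bigl.
have hprod : \prod_(i in predT) E i = (pr a k.+2) ^+ 2.
  by rewrite /E prodrXl; congr (_ ^+ _); apply: eq_bigl.
rewrite hsum hprod in hagm.
set mu := SA / (k.+2)%:R in hagm.
have hq0 : (k.+2)%:R != 0 :> R by rewrite pnatr_eq0.
have hSAq : SA = (k.+2)%:R * mu by rewrite /mu mulrC divfK.
have hmu0 : 0 <= mu by rewrite /mu divr_ge0 // /SA /sa sumr_ge0 // => i _; apply: sqr_ge0.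
have hA2 : pr a k.+2 ^+ 2 = (A ^+ 2) ^+ k.+2 by rewrite -hA -!exprM mulnC.
have hmuA : A ^+ 2 <= mu.
  by have := hagm.1; rewrite hA2 ler_pXn2r // nnegrE // sqr_ge0.
have hh2 : h ^+ 2 <= A ^+ 2 by apply: lerXn2r => //; rewrite nnegrE ltW // A_pos.
have hqpos : 0 < (k.+2)%:R :> R by rewrite ltr0n.
have hVz : V = 0.
  apply/eqP; rewrite eq_le hV0 andbT.
  have : (k.+2)%:R * h ^+ 2 <= (k.+2)%:R * mu.
    by rewrite ler_pM2l //; apply: le_trans hh2 hmuA.
  rewrite -key hSAq; lra.
have hmuE : mu = A ^+ 2.
  apply/eqP; rewrite eq_le hmuA andbT.
  have : (k.+2)%:R * mu <= (k.+2)%:R * A ^+ 2.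
    rewrite -hSAq; have : (k.+2)%:R * h ^+ 2 <= (k.+2)%:R * A ^+ 2 by rewrite ler_pM2l.
    by rewrite -key hVz mul0r addr0.
  by rewrite ler_pM2l.
have := eqbLR hagm.2; rewrite hA2 hmuE eqxx => /(_ isT) /forallP hall.
have hac i : (i < k.+2)%N -> a (i.+1)%:Z = a 1.
  move=> hi; have /forall_inP /(_ ord0 isT) := hall (Ordinal hi).
  by rewrite /E /= eqrXn2 ?ltW // => /eqP.
have hbc i : (i < k.+2)%N -> b (i.+1)%:Z = mid.
  move=> hi; have := psumr_eq0P (P := predT) (F := fun i : 'I_k.+2 => (b (i.+1)%:Z - mid) ^+ 2).
  move=> /(_ (fun j _ => sqr_ge0 _)) /(_ hVz) /(_ (Ordinal hi) isT) /eqP.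
  by rewrite sqrf_eq0 subr_eq0 => /eqP.
have hA' := period_ext (ltn0Sn _) hpa hac.
have hB' := period_ext (ltn0Sn _) hpb hbc.
by apply: (@hmin 1%N) => // n; rewrite !hA' !hB'.
Qed.

Lemma goal2 : exists m, (1 <= m <= k.+1)%N /\ lamm m < lamp m.
Proof.
have [/existsP [m /andP[hm0 hm]] | hno] :=
  boolP [exists m : 'I_k.+2, (0 < (m : nat))%N && (lamm m < lamp m)].
  by exists m; split => //; rewrite hm0 -ltnS ltn_ord.
exfalso.
have hclosed m : (1 <= m <= k.+1)%N -> lamm m = lamp m.
  move=> hmr; apply/eqP; rewrite eq_le (@hgap m hmr) /= leNgt; apply/negP => hlt.
  move/negP: hno; apply; apply/existsP.
  have hmk : (m < k.+2)%N by lia.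
  by exists (Ordinal hmk); rewrite /= hlt andbT; lia.
have hcover x : al <= x <= be -> `|D x| <= 2.
  move=> /andP[h1 h2]; apply/hspec.
  suff hs : forall j, (1 <= j <= k.+2)%N -> x <= lamm j ->
      exists m, (1 <= m <= k.+2)%N /\ lamp m.-1 <= x <= lamm m.
    by apply: (hs k.+2) => //; rewrite leqnn.
  elim => [//|j IH] hj hxj.
  case: j IH hj hxj => [|j] IH hj hxj; first by exists 1%N; rewrite h1 hxj.
  case: (lerP x (lamm j.+1)) => hxle; first by apply: IH => //; lia.
  exists j.+2; split => //; rewrite /= hxj andbT -(hclosed j.+1) ?ltW //; lia.
have hg1 := goal1.
set h := (be - al) / 4; set mid := (al + be) / 2.
have hab := al_lt_be.
have hh : 0 < h by rewrite /h divr_gt0 // ?subr_gt0 // ltr0n.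
have hAh : A < h by rewrite /h; lra.
have hlo : mid - 2 * h = al by rewrite /mid /h; field.
have hhi : mid + 2 * h = be by rewrite /mid /h; field.
have hA := A_pow.
have hpow : pr a k.+2 < h ^+ k.+2 by rewrite -hA ltrXn2r // ltW // A_pos.
have hprpos := pr_gt0 ha k.+2.
pose y i := cheb mid h k.+2 i.
have hyin i : (i <= k.+2)%N -> al <= y i <= be by move=> hi; rewrite -hlo -hhi; apply: cheb_in.
have hpos i : (i <= k.+2)%N ->
    0 < (-1) ^+ k.+2 * (-1) ^+ i * (T mid h k.+2 - pr a k.+2 *: Dk).[y i].
  move=> hi; rewrite sign_sub // hornerD hornerN hornerZ Dp_eval /y cheb_val //.
  have h1 : `|D (y i)| <= 2 by apply: hcover; apply: hyin.
  have h2 : (-1) ^+ (k.+2 - i) * D (y i) <= 2 by apply: le_trans (ler_norm _) _; rewrite norm_sign.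
  have h3 : pr a k.+2 * ((-1) ^+ (k.+2 - i) * D (y i)) <= pr a k.+2 * 2 by rewrite ler_wpM2l // ltW.
  have -> : (-1) ^+ (k.+2 - i) * (2 * h ^+ k.+2 * (-1) ^+ (k.+2 - i) - pr a k.+2 * D (cheb mid h k.+2 i))
     = 2 * h ^+ k.+2 * ((-1) ^+ (k.+2 - i) * (-1) ^+ (k.+2 - i)) - pr a k.+2 * ((-1) ^+ (k.+2 - i) * D (y i)).
    by rewrite /y; ring.
  rewrite sign_sq mulr1; lra.
have hR : T mid h k.+2 - pr a k.+2 *: Dk = 0.
  apply: (@alt_zero _ k.+2 _ y ((-1) ^+ k.+2) (signNZ _)).
  - by rewrite -opprB size_polyN sz_diff.
  - by move=> i hi; apply: cheb_incr => //; lia.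
  - by move=> i hi; apply: ltW; apply: hpos.
by have := hpos 0%N isT; rewrite hR horner0 mulr0 ltxx.
Qed.
End Main.

Unset Implicit Arguments.

Theorem lemma2 (R : realType) (q : nat) (a b : int -> R)
  (lamp lamm : nat -> R)
  (hq : (2 <= q)%N)
  (ha : forall n, 0 < a n)
  (hpa : forall n, a (n + q%:Z) = a n)
  (hpb : forall n, b (n + q%:Z) = b n)
  (hmin : forall p : nat, (1 <= p < q)%N ->
      ~ (forall n, a (n + p%:Z) = a n /\ b (n + p%:Z) = b n))
  (* band edges lamp (m-1) = lambda^+_{m-1}, lamm m = lambda^-_m *)
  (hband : forall m : nat, (1 <= m <= q)%N -> lamp m.-1 < lamm m)
  (hgap : forall m : nat, (1 <= m <= q.-1)%N -> lamm m <= lamp m)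
  (hspec : forall x : R, `|discr a b q x| <= 2 <->
      exists m : nat, (1 <= m <= q)%N /\ lamp m.-1 <= x <= lamm m) :
  (lamm q - lamp 0%N) / 2 > 2 * geomA a q /\
  exists m : nat, (1 <= m <= q.-1)%N /\ lamm m < lamp m.
Proof.
have [k hk] : exists k, q = k.+2 by exists (q - 2)%N; lia.
subst q.
split.
  exact: (goal1 ha hpa hpb hband hgap hmin hspec).
exact: (goal2 ha hpa hpb hband hgap hmin hspec).
Qed.
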